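(* For every $n\ge25$ and every integer $t$ with $\frac{n^2}{8}+\frac{n}{2}-2\le t\le \frac{n^2}{4}+\frac{n^2}{16}-3n+\frac{205}{16}$, there exists an $(n,t)$-blocker.
   Context: For a convex $n$-gon: an edge is a segment between two vertices; diagonals are edges that are not sides of the polygon. Two edges cross if they share an interior point. A triangulation is a maximal set of pairwise non-crossing diagonals. A blocker is a set $B$ of diagonals having a diagonal in common with every triangulation; it is saturated if for every $e\in B$, $B\setminus\{e\}$ is not a blocker. An $(n,t)$-blocker is a saturated blocker of size $t$ for a convex $n$-gon. *)

(* Defs.v *)
From mathcomp Require Import all_boot all_order all_algebra.
Set Implicit Arguments. Unset Strict Implicit. Unset Printing Implicit Defensive.
Import Order.TTheory GRing.Theory Num.Theory.

(* Convex n-gon with vertices 0,1,...,n-1 in cyclic (convex) order.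
   An edge {i,j} (i<j) is encoded as the ordered pair (i,j) : 'I_n * 'I_n. *)
Section Polygon.
Variable n : nat.

Definition is_edge (e : 'I_n * 'I_n) : bool := (e.1 < e.2)%N.

Definition is_side (e : 'I_n * 'I_n) : bool :=
  is_edge e && ((e.2 == e.1.+1 :> nat) || ((e.1 == 0 :> nat) && (e.2 == n.-1 :> nat))).

Definition is_diagonal (e : 'I_n * 'I_n) : bool := is_edge e && ~~ is_side e.

(* for vertices in strictly convex position, two distinct edges share an
   interior point iff their endpoints strictly interleave *)
Definition cross (e f : 'I_n * 'I_n) : bool :=
  [&& (e.1 < f.1)%N, (f.1 < e.2)%N & (e.2 < f.2)%N] ||
  [&& (f.1 < e.1)%N, (e.1 < f.2)%N & (f.2 < e.2)%N].

Definition noncrossing (S : {set 'I_n * 'I_n}) : bool :=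
  [forall e in S, forall f in S, ~~ cross e f].

Definition triangulation (T : {set 'I_n * 'I_n}) : bool :=
  [&& [forall e in T, is_diagonal e], noncrossing T &
      [forall d, (is_diagonal d && (d \notin T)) ==> ~~ noncrossing (d |: T)]].

Definition blocker (B : {set 'I_n * 'I_n}) : bool :=
  [forall e in B, is_diagonal e] &&
  [forall T : {set 'I_n * 'I_n}, triangulation T ==> (B :&: T != set0)].

Definition saturated_blocker (B : {set 'I_n * 'I_n}) : bool :=
  blocker B && [forall e in B, ~~ blocker (B :\ e)].

End Polygon.

Definition nt_blocker (n : nat) (t : int) (B : {set 'I_n * 'I_n}) : Prop :=
  saturated_blocker B /\ (Posz #|B| = t).

(* Main.v *)
Require Import Defs.
From mathcomp Require Import all_boot all_order all_algebra.
From mathcomp Require Import zify.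
From mathcomp Require Import lra.
Set Implicit Arguments. Unset Strict Implicit. Unset Printing Implicit Defensive.

(* Construction: for a diagonal d = (lo,r) of the sub-polygon [lo..hi], and a
   saturated blocker C of a sub-polygon [a..b] with lo < a, a+2 <= b < r < hi,
   the set C + {crossers (x,y) of d with x <> a,b} + {(lo,b),(a,r),(lo,r)}
   is a saturated blocker of [lo..hi]; together with the crossing family of a
   diagonal this yields all sizes in the required range. *)

Section Blk.
Variable n' : nat.
Local Notation N := n'.+1.
Local Notation E := ('I_N * 'I_N)%type.

Definition crossn (u v u' v' : nat) : bool :=
  [&& u < u', u' < v & v < v'] || [&& u' < u, u < v' & v' < v].
Lemma crossE (e f : E) : cross e f = crossn e.1 e.2 f.1 f.2.
Proof. by []. Qed.

Definition inside (lo hi : nat) (e : E) : bool :=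
  [&& lo <= e.1, e.2 <= hi, e.1.+2 <= e.2 & ~~ ((e.1 == lo :> nat) && (e.2 == hi :> nat))].

Definition ncs (S : {set E}) : Prop := forall e f, e \in S -> f \in S -> ~~ cross e f.
Definition maxnc lo hi (S : {set E}) : Prop :=
  [/\ (forall e, e \in S -> inside lo hi e), ncs S &
      forall g, inside lo hi g -> g \notin S -> exists2 h, h \in S & cross g h].
Definition blocks lo hi (C : {set E}) : Prop :=
  (forall c, c \in C -> inside lo hi c) /\
  (forall S, maxnc lo hi S -> exists2 c, c \in C & c \in S).
Definition witnessed lo hi (C : {set E}) : Prop :=
  forall c, c \in C -> exists S0 : {set E},
    [/\ (forall e, e \in S0 -> inside lo hi e), ncs S0, c \in S0 &
        forall c', c' \in C -> c' != c -> exists2 h, h \in S0 & cross c' h].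

Lemma diag_inside (e : E) : is_diagonal e = inside 0 n' e.
Proof.
rewrite /is_diagonal /is_side /is_edge /inside.
case: e => [[x hx] [y hy]] /=.
apply/idP/idP; lia.
Qed.

Lemma cross_irr (e : E) : ~~ cross e e.
Proof. rewrite crossE /crossn; lia. Qed.

Lemma crossC (e f : E) : cross e f = cross f e.
Proof. rewrite !crossE /crossn; lia. Qed.

Lemma ncsP (S : {set E}) : reflect (ncs S) (noncrossing S).
Proof.
apply: (iffP idP).
- move=> /forall_inP H e f eS fS. exact: (forall_inP (H e eS) f fS).
- move=> H; apply/forall_inP => e eS; apply/forall_inP => f fS; exact: H.
Qed.

Lemma ncs_neg (S : {set E}) : ~~ noncrossing S ->
  exists e f, [/\ e \in S, f \in S & cross e f].
Proof.
rewrite negb_forall => /existsP [e]; rewrite negb_imply => /andP[eS].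
rewrite negb_forall => /existsP[f]; rewrite negb_imply negbK => /andP[fS cef].
by exists e, f.
Qed.

Lemma tri_maxnc T : triangulation T -> maxnc 0 n' T.
Proof.
case/and3P => /forall_inP Hd /ncsP Hnc /forallP Hmax.
split => //.
- by move=> e /Hd; rewrite diag_inside.
- move=> g gi gT.
  have := Hmax g; rewrite diag_inside gi gT /= => Hn.
  have [e [f [eS fS cef]]] := ncs_neg Hn.
  move: eS fS cef; rewrite !in_setU1 => /orP[/eqP-> | eT] /orP[/eqP-> | fT].
  + by rewrite (negbTE (cross_irr _)).
  + by move=> c; exists f.
  + by move=> c; exists e => //; rewrite crossC.
  + by move=> c; move: (Hnc e f eT fT); rewrite c.
Qed.

Lemma extend (S0 : {set E}) : (forall e, e \in S0 -> inside 0 n' e) -> ncs S0 ->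
  exists T, triangulation T /\ S0 \subset T.
Proof.
move=> Hi Hn.
pose P (S : {set E}) := [&& S0 \subset S, [forall e in S, is_diagonal e] & noncrossing S].
have PS0 : P S0.
  apply/and3P; split => //; first by apply/forall_inP => e /Hi; rewrite diag_inside.
  exact/ncsP.
case: (@arg_maxnP _ S0 P (fun S : {set E} => #|S|) PS0) => T /and3P[sT dT nT] Tmax.
exists T; split => //.
apply/and3P; split => //.
apply/forallP => d; apply/implyP => /andP[dd dT'].
apply/negP => nd.
have : P (d |: T).
  apply/and3P; split => //.
  - by apply: subset_trans sT (subsetUr _ _).
  - apply/forall_inP => e; rewrite in_setU1 => /orP[/eqP-> // | eT].
    exact: (forall_inP dT).
move=> Pd; move: (Tmax (d |: T) Pd).
by rewrite cardsU1 dT' /= ltnn.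
Qed.

Lemma top_sat B : blocks 0 n' B -> witnessed 0 n' B -> saturated_blocker B.
Proof.
move=> [Bi Bb] Bw.
apply/andP; split.
- apply/andP; split.
  + by apply/forall_inP => e /Bi; rewrite diag_inside.
  + apply/forallP => T; apply/implyP => /tri_maxnc /Bb [c cB cT].
    by apply/set0Pn; exists c; rewrite inE cB cT.
- apply/forall_inP => e eB.
  have [S0 [S0i S0n eS0 S0c]] := Bw e eB.
  have [T [Tt sT]] := extend S0i S0n.
  apply/negP => /andP[_ /forallP /(_ T)]; rewrite Tt /= => /set0Pn [c].
  rewrite !inE => /andP[/andP[ce cB] cT].
  have [h hS0 ch] := S0c c cB ce.
  have hT : h \in T := subsetP sT h hS0.
  case/and3P: Tt => _ /ncsP Hnc _.
  by move: (Hnc c h cT hT); rewrite ch.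
Qed.
End Blk.


Definition Mt := [:: 0;0;0;0;2;3;5;5;10;13;17;21;26;31].
Definition F (x : nat) : nat := (x %/ 2) * (x - x %/ 2) - x.
Definition M (q : nat) : nat := if q < 14 then nth 0 Mt q else F q.
Definition base (q r : nat) : nat := 3 + (r - 3) * (q - 1 - r).

Definition stepok (q s : nat) : bool :=
  [|| s <= M q.-1,
      has (fun qq => has (fun k => s == k * (qq - 2 - k) + 1) (iota 1 (qq - 3))) (iota 4 (q - 3))
    | has (fun r => (base q r + 2 <= s) && (s <= base q r + M r.-1)) (iota 5 (q - 6))].

Definition smallcheck : bool :=
  all (fun q => all (fun s => stepok q s) (iota 2 (M q).-1)) (iota 0 14).

Lemma smallcheck_ok : smallcheck.
Proof. by vm_compute. Qed.

Lemma M_big q : 14 <= q -> M q = F q.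
Proof. by move=> h; rewrite /M ltnNge h. Qed.

Lemma F_le_M x : F x <= M x.
Proof.
case: (ltnP x 14) => h; last by rewrite M_big.
have : all (fun x => F x <= M x) (iota 0 14) by vm_compute.
by move/allP/(_ x); apply; rewrite mem_iota.
Qed.

Lemma half_split q : exists k, q = k.*2 \/ q = k.*2.+1.
Proof. exists q./2; case/orP: (orbN (odd q)) => h; [right|left]; rewrite -[LHS]odd_double_half ?h //; by rewrite (negbTE h). Qed.

Lemma FE0 m : F (m * 2) + m * 2 = m * m + (m < 2) * (m * 2 - m * m).
Proof. rewrite /F. have -> : m * 2 %/ 2 = m by lia. have -> : m * 2 - m = m by lia. case: (ltnP m 2) => h /=; nia. Qed.
Lemma FE0' m : 2 <= m -> F (m * 2) + m * 2 = m * m.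
Proof. move=> h; rewrite FE0; have -> : (m < 2) = false by lia. by rewrite mul0n addn0. Qed.
Lemma FE1' m : 2 <= m -> F (m * 2 + 1) + (m * 2 + 1) = m * (m + 1).
Proof. move=> h; rewrite /F. have -> : (m * 2 + 1) %/ 2 = m by lia. have -> : m * 2 + 1 - m = m + 1 by lia. nia. Qed.

Lemma half_split14 q : 14 <= q -> exists j, q = j * 2 + 14 \/ q = j * 2 + 15.
Proof.
move=> h; exists ((q - 14) %/ 2).
case/orP: (orbN (odd (q - 14))) => o; [right|left]; lia.
Qed.

Lemma stepok_big q s : 14 <= q -> 2 <= s <= M q -> stepok q s.
Proof.
move=> q14 /andP[s2 sM].
case: (leqP s (M q.-1)) => [h|h]; first by rewrite /stepok h.
apply/orP; right; apply/orP; right.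
have h' := leq_ltn_trans (F_le_M q.-1) h.
rewrite M_big // in sM.
have m3 := F_le_M (q - 3); have m4 := F_le_M (q - 4); have m5 := F_le_M (q - 5).
apply/hasP.
have [j [qe|qe]] := half_split14 q14; subst q.
- have Ehp : (j * 2 + 14).-1 = (j + 6) * 2 + 1 by lia.
  rewrite Ehp in h'.
  have Fhp := @FE1' (j + 6) ltac:(lia).
  have EsM : j * 2 + 14 = (j + 7) * 2 by lia.
  rewrite EsM in sM.
  have FsM := @FE0' (j + 7) ltac:(lia).
  have Em3 : j * 2 + 14 - 3 = (j + 5) * 2 + 1 by lia.
  rewrite Em3 in m3.
  have Fm3 := @FE1' (j + 5) ltac:(lia).
  have Em4 : j * 2 + 14 - 4 = (j + 5) * 2 by lia.
  rewrite Em4 in m4.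
  have Fm4 := @FE0' (j + 5) ltac:(lia).
  have Em5 : j * 2 + 14 - 5 = (j + 4) * 2 + 1 by lia.
  rewrite Em5 in m5.
  have Fm5 := @FE1' (j + 4) ltac:(lia).
  have Eb2 : base (j * 2 + 14) (j * 2 + 14 - 2) = 3 + (j * 2 + 9) * 1 by rewrite /base; lia.
  have Eb3 : base (j * 2 + 14) (j * 2 + 14 - 3) = 3 + (j * 2 + 8) * 2 by rewrite /base; lia.
  have Eb4 : base (j * 2 + 14) (j * 2 + 14 - 4) = 3 + (j * 2 + 7) * 3 by rewrite /base; lia.
  rewrite ?Eb2 ?Eb3 ?Eb4.
  case: (leqP s (3 + (j * 2 + 9) * 1 + M (j * 2 + 14 - 3))) => hh2.
    exists (j * 2 + 14 - 2); first by rewrite mem_iota; lia.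
    have -> : (j * 2 + 14 - 2).-1 = j * 2 + 14 - 3 by lia.
    have Eb : base (j * 2 + 14) (j * 2 + 14 - 2) = 3 + (j * 2 + 9) * 1 by rewrite /base; lia.
    rewrite Eb.
    rewrite ?Em3 ?Em4 ?Em5 in hh2 *; apply/andP; split; nia.
  case: (leqP s (3 + (j * 2 + 8) * 2 + M (j * 2 + 14 - 4))) => hh3.
    exists (j * 2 + 14 - 3); first by rewrite mem_iota; lia.
    have -> : (j * 2 + 14 - 3).-1 = j * 2 + 14 - 4 by lia.
    have Eb : base (j * 2 + 14) (j * 2 + 14 - 3) = 3 + (j * 2 + 8) * 2 by rewrite /base; lia.
    rewrite Eb.
    rewrite ?Em3 ?Em4 ?Em5 in hh2 hh3 *; apply/andP; split; nia.
  exists (j * 2 + 14 - 4); first by rewrite mem_iota; lia.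
  have -> : (j * 2 + 14 - 4).-1 = j * 2 + 14 - 5 by lia.
  have Eb : base (j * 2 + 14) (j * 2 + 14 - 4) = 3 + (j * 2 + 7) * 3 by rewrite /base; lia.
  rewrite Eb.
  rewrite ?Em3 ?Em4 ?Em5 in hh2 hh3 *; apply/andP; split; nia.
- have Ehp : (j * 2 + 15).-1 = (j + 7) * 2 by lia.
  rewrite Ehp in h'.
  have Fhp := @FE0' (j + 7) ltac:(lia).
  have EsM : j * 2 + 15 = (j + 7) * 2 + 1 by lia.
  rewrite EsM in sM.
  have FsM := @FE1' (j + 7) ltac:(lia).
  have Em3 : j * 2 + 15 - 3 = (j + 6) * 2 by lia.
  rewrite Em3 in m3.
  have Fm3 := @FE0' (j + 6) ltac:(lia).
  have Em4 : j * 2 + 15 - 4 = (j + 5) * 2 + 1 by lia.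
  rewrite Em4 in m4.
  have Fm4 := @FE1' (j + 5) ltac:(lia).
  have Em5 : j * 2 + 15 - 5 = (j + 5) * 2 by lia.
  rewrite Em5 in m5.
  have Fm5 := @FE0' (j + 5) ltac:(lia).
  have Eb2 : base (j * 2 + 15) (j * 2 + 15 - 2) = 3 + (j * 2 + 10) * 1 by rewrite /base; lia.
  have Eb3 : base (j * 2 + 15) (j * 2 + 15 - 3) = 3 + (j * 2 + 9) * 2 by rewrite /base; lia.
  have Eb4 : base (j * 2 + 15) (j * 2 + 15 - 4) = 3 + (j * 2 + 8) * 3 by rewrite /base; lia.
  rewrite ?Eb2 ?Eb3 ?Eb4.
  case: (leqP s (3 + (j * 2 + 10) * 1 + M (j * 2 + 15 - 3))) => hh2.
    exists (j * 2 + 15 - 2); first by rewrite mem_iota; lia.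
    have -> : (j * 2 + 15 - 2).-1 = j * 2 + 15 - 3 by lia.
    have Eb : base (j * 2 + 15) (j * 2 + 15 - 2) = 3 + (j * 2 + 10) * 1 by rewrite /base; lia.
    rewrite Eb.
    rewrite ?Em3 ?Em4 ?Em5 in hh2 *; apply/andP; split; nia.
  case: (leqP s (3 + (j * 2 + 9) * 2 + M (j * 2 + 15 - 4))) => hh3.
    exists (j * 2 + 15 - 3); first by rewrite mem_iota; lia.
    have -> : (j * 2 + 15 - 3).-1 = j * 2 + 15 - 4 by lia.
    have Eb : base (j * 2 + 15) (j * 2 + 15 - 3) = 3 + (j * 2 + 9) * 2 by rewrite /base; lia.
    rewrite Eb.
    rewrite ?Em3 ?Em4 ?Em5 in hh2 hh3 *; apply/andP; split; nia.
  exists (j * 2 + 15 - 4); first by rewrite mem_iota; lia.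
  have -> : (j * 2 + 15 - 4).-1 = j * 2 + 15 - 5 by lia.
  have Eb : base (j * 2 + 15) (j * 2 + 15 - 4) = 3 + (j * 2 + 8) * 3 by rewrite /base; lia.
  rewrite Eb.
  rewrite ?Em3 ?Em4 ?Em5 in hh2 hh3 *; apply/andP; split; nia.
Qed.

Lemma stepok_all q s : 2 <= s <= M q -> stepok q s.
Proof.
case: (leqP 14 q) => hq; first exact: stepok_big.
move=> hs.
have := smallcheck_ok; move/allP/(_ q); rewrite mem_iota /= add0n => /(_ hq) /allP; apply.
rewrite mem_iota; lia.
Qed.

Lemma F_ge x : 8 <= x -> x <= F x + 3.
Proof.
move=> h.
have [m [xe|xe]] : exists m, x = m * 2 \/ x = m * 2 + 1.
  by exists (x %/ 2); case/orP: (orbN (odd x)) => o; [right|left]; lia.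
- subst x; have := @FE0' m ltac:(lia); move: (F _) => Fv E; nia.
- subst x; have := @FE1' m ltac:(lia); move: (F _) => Fv E; nia.
Qed.

Lemma base_step n r : 4 <= r -> r < n -> base n r.-1 + n + 3 = base n r + 2 * r.
Proof.
move=> h1 h2; rewrite /base.
have [a ea] : exists a, r = a + 4 by exists (r - 4); lia.
have [b eb] : exists b, n = a + b + 5 by exists (n - a - 5); lia.
subst r n.
have -> : (a + 4).-1 - 3 = a by lia.
have -> : a + b + 5 - 1 - (a + 4).-1 = b + 1 by lia.
have -> : a + 4 - 3 = a + 1 by lia.
have -> : a + b + 5 - 1 - (a + 4) = b by lia.
nia.
Qed.

Lemma overlap n r : 17 <= r -> r <= n - 2 -> base n r.-1 + 1 <= base n r + M r.-1.
Proof.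
move=> h1 h2.
have := base_step (n := n) (r := r) ltac:(lia) ltac:(lia).
have := F_ge (x := r.-1) ltac:(lia).
have := F_le_M r.-1.
lia.
Qed.

Lemma sweep n d : forall r1 t, r1 + d = n - 2 -> 5 <= r1 ->
  (forall r, r1 < r <= n - 2 -> base n r.-1 + 1 <= base n r + M r.-1) ->
  base n (n - 2) + 2 <= t <= base n r1 + M r1.-1 ->
  exists r, [/\ 5 <= r, r <= n - 2, base n r + 2 <= t & t <= base n r + M r.-1].
Proof.
elim: d => [|d IH] r1 t hd h5 hov /andP[tl tu].
  by exists r1; split => //; [lia | rewrite -(_ : n - 2 = r1) //; lia].
case: (leqP (base n r1 + 2) t) => h.
  by exists r1; split => //; lia.
apply: (IH r1.+1) => //; [lia | lia | |].
  move=> r /andP[hr1 hr2]; apply: hov; lia.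
apply/andP; split => //.
have := hov r1.+1 ltac:(lia); rewrite /=. lia.
Qed.

Lemma top_end n t : 25 <= n -> 16 * t + 48 * n <= 5 * (n * n) + 205 ->
  t <= base n (n * 2 %/ 3) + M (n * 2 %/ 3).-1.
Proof.
move=> n25 ht.
have [k [i [ne i6]]] : exists k i, n = k * 6 + 24 + i /\ i < 6 by exists ((n - 24) %/ 6), ((n - 24) %% 6); lia.
subst n.
case: (i =P 0) => [ie | /eqP hi0].
  subst i.
  have -> : (k * 6 + 24 + 0) * 2 %/ 3 = k * 4 + 16 by lia.
  have E1 : (k * 4 + 16).-1 = (k * 2 + 7) * 2 + 1 by lia.
  have hF := F_le_M (k * 4 + 16).-1. rewrite E1 in hF.
  have hE := @FE1' (k * 2 + 7) ltac:(lia).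
  rewrite E1.
  have -> : base (k * 6 + 24 + 0) (k * 4 + 16) = 3 + (k * 4 + 13) * (k * 2 + 7) by rewrite /base; lia.
  move: (F _) hE hF => Fv hE hF.
  have key : 16 * (3 + (k * 4 + 13) * (k * 2 + 7) + Fv) + 48 * (k * 6 + 24 + 0) = 5 * ((k * 6 + 24 + 0) * (k * 6 + 24 + 0)) + 205 + (12 * (k * k) + 128 * k + 227) by nia.
  move: key ht hF; move: ((k * 4 + 13) * (k * 2 + 7)) ((k * 6 + 24 + 0) * (k * 6 + 24 + 0)) (k * k) => P NN KK.
  lia.
case: (i =P 1) => [ie | /eqP hi1].
  subst i.
  have -> : (k * 6 + 24 + 1) * 2 %/ 3 = k * 4 + 16 by lia.
  have E1 : (k * 4 + 16).-1 = (k * 2 + 7) * 2 + 1 by lia.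
  have hF := F_le_M (k * 4 + 16).-1. rewrite E1 in hF.
  have hE := @FE1' (k * 2 + 7) ltac:(lia).
  rewrite E1.
  have -> : base (k * 6 + 24 + 1) (k * 4 + 16) = 3 + (k * 4 + 13) * (k * 2 + 8) by rewrite /base; lia.
  move: (F _) hE hF => Fv hE hF.
  have key : 16 * (3 + (k * 4 + 13) * (k * 2 + 8) + Fv) + 48 * (k * 6 + 24 + 1) = 5 * ((k * 6 + 24 + 1) * (k * 6 + 24 + 1)) + 205 + (12 * (k * k) + 132 * k + 238) by nia.
  move: key ht hF; move: ((k * 4 + 13) * (k * 2 + 8)) ((k * 6 + 24 + 1) * (k * 6 + 24 + 1)) (k * k) => P NN KK.
  lia.
case: (i =P 2) => [ie | /eqP hi2].
  subst i.
  have -> : (k * 6 + 24 + 2) * 2 %/ 3 = k * 4 + 17 by lia.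
  have E1 : (k * 4 + 17).-1 = (k * 2 + 8) * 2 by lia.
  have hF := F_le_M (k * 4 + 17).-1. rewrite E1 in hF.
  have hE := @FE0' (k * 2 + 8) ltac:(lia).
  rewrite E1.
  have -> : base (k * 6 + 24 + 2) (k * 4 + 17) = 3 + (k * 4 + 14) * (k * 2 + 8) by rewrite /base; lia.
  move: (F _) hE hF => Fv hE hF.
  have key : 16 * (3 + (k * 4 + 14) * (k * 2 + 8) + Fv) + 48 * (k * 6 + 24 + 2) = 5 * ((k * 6 + 24 + 2) * (k * 6 + 24 + 2)) + 205 + (12 * (k * k) + 136 * k + 271) by nia.
  move: key ht hF; move: ((k * 4 + 14) * (k * 2 + 8)) ((k * 6 + 24 + 2) * (k * 6 + 24 + 2)) (k * k) => P NN KK.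
  lia.
case: (i =P 3) => [ie | /eqP hi3].
  subst i.
  have -> : (k * 6 + 24 + 3) * 2 %/ 3 = k * 4 + 18 by lia.
  have E1 : (k * 4 + 18).-1 = (k * 2 + 8) * 2 + 1 by lia.
  have hF := F_le_M (k * 4 + 18).-1. rewrite E1 in hF.
  have hE := @FE1' (k * 2 + 8) ltac:(lia).
  rewrite E1.
  have -> : base (k * 6 + 24 + 3) (k * 4 + 18) = 3 + (k * 4 + 15) * (k * 2 + 8) by rewrite /base; lia.
  move: (F _) hE hF => Fv hE hF.
  have key : 16 * (3 + (k * 4 + 15) * (k * 2 + 8) + Fv) + 48 * (k * 6 + 24 + 3) = 5 * ((k * 6 + 24 + 3) * (k * 6 + 24 + 3)) + 205 + (12 * (k * k) + 140 * k + 294) by nia.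
  move: key ht hF; move: ((k * 4 + 15) * (k * 2 + 8)) ((k * 6 + 24 + 3) * (k * 6 + 24 + 3)) (k * k) => P NN KK.
  lia.
case: (i =P 4) => [ie | /eqP hi4].
  subst i.
  have -> : (k * 6 + 24 + 4) * 2 %/ 3 = k * 4 + 18 by lia.
  have E1 : (k * 4 + 18).-1 = (k * 2 + 8) * 2 + 1 by lia.
  have hF := F_le_M (k * 4 + 18).-1. rewrite E1 in hF.
  have hE := @FE1' (k * 2 + 8) ltac:(lia).
  rewrite E1.
  have -> : base (k * 6 + 24 + 4) (k * 4 + 18) = 3 + (k * 4 + 15) * (k * 2 + 9) by rewrite /base; lia.
  move: (F _) hE hF => Fv hE hF.
  have key : 16 * (3 + (k * 4 + 15) * (k * 2 + 9) + Fv) + 48 * (k * 6 + 24 + 4) = 5 * ((k * 6 + 24 + 4) * (k * 6 + 24 + 4)) + 205 + (12 * (k * k) + 144 * k + 307) by nia.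
  move: key ht hF; move: ((k * 4 + 15) * (k * 2 + 9)) ((k * 6 + 24 + 4) * (k * 6 + 24 + 4)) (k * k) => P NN KK.
  lia.
case: (i =P 5) => [ie | /eqP hi5].
  subst i.
  have -> : (k * 6 + 24 + 5) * 2 %/ 3 = k * 4 + 19 by lia.
  have E1 : (k * 4 + 19).-1 = (k * 2 + 9) * 2 by lia.
  have hF := F_le_M (k * 4 + 19).-1. rewrite E1 in hF.
  have hE := @FE0' (k * 2 + 9) ltac:(lia).
  rewrite E1.
  have -> : base (k * 6 + 24 + 5) (k * 4 + 19) = 3 + (k * 4 + 16) * (k * 2 + 9) by rewrite /base; lia.
  move: (F _) hE hF => Fv hE hF.
  have key : 16 * (3 + (k * 4 + 16) * (k * 2 + 9) + Fv) + 48 * (k * 6 + 24 + 5) = 5 * ((k * 6 + 24 + 5) * (k * 6 + 24 + 5)) + 205 + (12 * (k * k) + 148 * k + 342) by nia.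
  move: key ht hF; move: ((k * 4 + 16) * (k * 2 + 9)) ((k * 6 + 24 + 5) * (k * 6 + 24 + 5)) (k * k) => P NN KK.
  lia.
lia.
Qed.

Lemma top_arith n t : 25 <= n -> n * n + 4 * n <= 8 * t + 16 -> 16 * t + 48 * n <= 5 * (n * n) + 205 ->
  exists r, [/\ 5 <= r, r <= n - 2, base n r + 2 <= t & t <= base n r + M r.-1].
Proof.
move=> n25 h1 h2.
apply: (@sweep n (n - 2 - n * 2 %/ 3) (n * 2 %/ 3)); [lia | lia | |].
  move=> r /andP[hr1 hr2]; apply: overlap; lia.
apply/andP; split; last exact: top_end.
have -> : base n (n - 2) = n - 2 by rewrite /base; lia.
nia.
Qed.


Section G.
Variable n' : nat.
Local Notation N := n'.+1.
Local Notation E := ('I_N * 'I_N)%type.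
Local Notation inside := (@inside n').
Local Notation ncs := (@ncs n').
Local Notation maxnc := (@maxnc n').
Local Notation blocks := (@blocks n').
Local Notation witnessed := (@witnessed n').

Definition pt (x y : nat) : E := (inord x, inord y).
Lemma pt1 x y : x <= n' -> (pt x y).1 = x :> nat.
Proof. by move=> h; rewrite /= inordK. Qed.
Lemma pt2 x y : y <= n' -> (pt x y).2 = y :> nat.
Proof. by move=> h; rewrite /= inordK. Qed.

Lemma eqE2 (e f : E) : (e == f) = (e.1 == f.1 :> nat) && (e.2 == f.2 :> nat).
Proof. by case: e f => [a b] [c d]. Qed.

Lemma eq_pt (e : E) x y : x <= n' -> y <= n' -> (e == pt x y) = (e.1 == x :> nat) && (e.2 == y :> nat).
Proof. by move=> hx hy; rewrite eqE2 pt1 ?pt2. Qed.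

Definition pset lo hi (P : nat -> nat -> bool) : {set E} := [set e : E | inside lo hi e && P e.1 e.2].

Lemma in_pset lo hi P e : (e \in pset lo hi P) = inside lo hi e && P e.1 e.2.
Proof. by rewrite inE. Qed.

Lemma pset_ncs lo hi (P : nat -> nat -> bool) :
  (forall u v u' v', P u v -> P u' v' -> lo <= u -> u.+2 <= v -> v <= hi ->
     lo <= u' -> u'.+2 <= v' -> v' <= hi -> ~~ crossn u v u' v') -> ncs (pset lo hi P).
Proof.
move=> H e f; rewrite !in_pset /inside => /andP[/and4P[h1 h2 h3 _] pe] /andP[/and4P[h1' h2' h3' _] pf].
by rewrite crossE; apply: H.
Qed.

Lemma pset_inside lo hi P e : e \in pset lo hi P -> inside lo hi e.
Proof. by rewrite in_pset => /andP[]. Qed.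

Lemma pset_h lo hi (P : nat -> nat -> bool) (c : E) u v : hi <= n' -> lo <= u -> u.+2 <= v -> v <= hi ->
  ~~ ((u == lo) && (v == hi)) -> P u v -> crossn c.1 c.2 u v -> exists2 h, h \in pset lo hi P & cross c h.
Proof.
move=> hn h1 h2 h3 h4 hp hc; exists (pt u v).
  rewrite in_pset /inside pt1 ?pt2 ?hp ?andbT; lia.
by rewrite crossE pt1 ?pt2 //; lia.
Qed.

Lemma pt_in_pset lo hi (P : nat -> nat -> bool) u v : hi <= n' -> lo <= u -> u.+2 <= v -> v <= hi ->
  ~~ ((u == lo) && (v == hi)) -> P u v -> pt u v \in pset lo hi P.
Proof.
move=> hn h1 h2 h3 h4 hp.
rewrite in_pset /inside pt1 ?pt2 ?hp ?andbT; lia.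
Qed.

Lemma inside_le lo hi e : hi <= n' -> inside lo hi e -> [/\ lo <= e.1, e.1.+2 <= e.2, e.2 <= hi & ~~ ((e.1 == lo :> nat) && (e.2 == hi :> nat))].
Proof. by move=> _ /and4P[]. Qed.

Definition itv (x y : nat) : {set 'I_N} := [set i : 'I_N | x <= i < y].

Lemma card_itv x y : y <= N -> #|itv x y| = y - x.
Proof.
elim: y => [|y IH] hy.
  by apply/eqP; rewrite cards_eq0; apply/eqP/setP => i; rewrite !inE; lia.
case: (leqP x y) => hxy.
  have -> : itv x y.+1 = inord y |: itv x y.
    apply/setP => i; rewrite !inE.
    rewrite -val_eqE /= inordK //; lia.
  rewrite cardsU1 IH; last lia.
  rewrite !inE inordK //; lia.
have -> : itv x y.+1 = set0.
  by apply/setP => i; rewrite !inE; lia.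
by rewrite cards0; lia.
Qed.

Definition Xfam lo v hi := pset lo hi (fun u w => ((u == lo) && (w == v)) || [&& lo < u, u < v & v < w]).

Lemma maxnc_inside lo hi S e : maxnc lo hi S -> e \in S -> inside lo hi e.
Proof. by case=> H _ _; apply: H. Qed.

Lemma Xfam_blocks lo v hi : lo.+2 <= v -> v < hi -> hi <= n' -> blocks lo hi (Xfam lo v hi).
Proof.
move=> h1 h2 h3; split; first by move=> c; apply: pset_inside.
move=> S HS.
have gin : pt lo v \in Xfam lo v hi by apply: pt_in_pset => //; lia.
case: (boolP (pt lo v \in S)) => gS; first by exists (pt lo v).
case: HS => Hi Hn Hm.
have [h hS ch] := Hm (pt lo v) (pset_inside gin) gS.
exists h => //.
have := Hi h hS; rewrite /inside => hin.
rewrite in_pset /inside hin /=.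
move: ch; rewrite crossE pt1 ?pt2 /crossn; lia.
Qed.

Lemma Xfam_wit lo v hi : lo.+2 <= v -> v < hi -> hi <= n' -> witnessed lo hi (Xfam lo v hi).
Proof.
move=> h1 h2 h3 [x y].
rewrite in_pset /inside /= => /andP[/and4P[c1 c2 c3 c4] cP].
case/orP: cP => [/andP[/eqP e1 /eqP e2] | /and3P[x1 x2 x3]].
- exists (pset lo hi (fun u w => (u == lo) && (w == v))); split.
  + by move=> e; apply: pset_inside.
  + by apply: pset_ncs => u w u' w' /andP[/eqP-> /eqP->] /andP[/eqP-> /eqP->]; rewrite /crossn; lia.
  + by rewrite in_pset /inside /= e1 e2 !eqxx; lia.
  + move=> [a b]; rewrite in_pset /inside /= => /andP[/and4P[d1 d2 d3 d4] dP]; rewrite eqE2 /= => ne.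
    apply: (@pset_h _ _ _ _ lo v) => //; try lia.
    rewrite /crossn /=; lia.
- exists (pset lo hi (fun u w => [|| (u == x) && (w == y), (u == lo) && (w == x), (u == x) && (w == v),
                                     (u == v) && (w == y) | (u == lo) && (w == y)])); split.
  + by move=> e; apply: pset_inside.
  + apply: pset_ncs => u w u' w' hp hp' *; rewrite /crossn; lia.
  + by rewrite in_pset /inside /= !eqxx /=; lia.
  + move=> [a b]; rewrite in_pset /inside /= => /andP[/and4P[d1 d2 d3 d4] dP]; rewrite eqE2 /= => ne.
    case/orP: dP => [/andP[/eqP f1 /eqP f2] | /and3P[y1 y2 y3]].
      apply: (@pset_h _ _ _ _ x y) => //; try lia.
      rewrite /crossn /=; lia.
    case: (ltngtP a x) => hx.
    * apply: (@pset_h _ _ _ _ lo x) => //; try lia.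
      rewrite /crossn /=; lia.
    * apply: (@pset_h _ _ _ _ x v) => //; try lia.
      rewrite /crossn /=; lia.
    * case: (ltngtP b y) => hy.
      -- apply: (@pset_h _ _ _ _ v y) => //; try lia.
         rewrite /crossn /=; lia.
      -- apply: (@pset_h _ _ _ _ lo y) => //; try lia.
         rewrite /crossn /=; lia.
      -- by move: ne; rewrite hx hy !eqxx.
Qed.

Lemma Xfam_card lo v hi : lo.+2 <= v -> v < hi -> hi <= n' -> #|Xfam lo v hi| = (v - lo - 1) * (hi - v) + 1.
Proof.
move=> h1 h2 h3.
have -> : Xfam lo v hi = pt lo v |: setX (itv lo.+1 v) (itv v.+1 hi.+1).
  apply/setP => [[a b]]; rewrite in_setU1 eq_pt ?in_pset /inside /=; try lia.
  rewrite !inE /=; apply/idP/idP; lia.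
rewrite cardsU1 cardsX !card_itv; try lia.
rewrite !inE /= pt1 //; lia.
Qed.
End G.


Section G2.
Variable n' : nat.
Local Notation N := n'.+1.
Local Notation E := ('I_N * 'I_N)%type.
Local Notation inside := (@inside n').
Local Notation ncs := (@ncs n').
Local Notation maxnc := (@maxnc n').
Local Notation blocks := (@blocks n').
Local Notation witnessed := (@witnessed n').
Local Notation pset := (@pset n').
Local Notation pt := (@pt n').
Local Notation itv := (@itv n').

Lemma pt_inside lo hi u w : hi <= n' -> lo <= u -> u.+2 <= w -> w <= hi ->
  ~~ ((u == lo) && (w == hi)) -> inside lo hi (pt u w).
Proof. move=> *; rewrite /inside pt1 ?pt2; lia. Qed.

Lemma inside_sub a b lo hi (e : E) : lo <= a -> b <= hi -> inside a b e -> inside lo hi e.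
Proof. case: e => [x y]; rewrite /inside /=; lia. Qed.

Definition Wp lo a b r (u w : nat) : bool := [&& lo < u, u < r, r < w, u != a & u != b].
Definition Epred lo a b r (u w : nat) : bool :=
  [|| Wp lo a b r u w, (u == lo) && (w == b), (u == a) && (w == r) | (u == lo) && (w == r)].
Definition Constr lo a b r hi (C : {set E}) : {set E} := C :|: pset lo hi (Epred lo a b r).

Section Hyps.
Variables (lo a b r hi : nat) (C : {set E}).
Hypotheses (hlo : lo < a) (hab : a.+2 <= b) (hbr : b < r) (hrh : r < hi) (hn : hi <= n').
Hypotheses (Cb : blocks a b C) (Cw : witnessed a b C).

Local Ltac secl := clear -hlo hab hbr hrh hn.

Lemma Constr_blocks : blocks lo hi (Constr lo a b r hi C).
Proof.
split.
  move=> c; rewrite in_setU; case/orP => [cC | cE]; last exact: (pset_inside cE).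
  case: Cb => Ci _; apply: (@inside_sub a b); [secl; lia | secl; lia | exact: Ci].
move=> S HS; case: (HS) => Hi Hn Hm.
have Ein (u w : nat) : lo <= u -> u.+2 <= w -> w <= hi -> ~~ ((u == lo) && (w == hi)) ->
    Epred lo a b r u w -> pt u w \in Constr lo a b r hi C.
  move=> *; rewrite in_setU; apply/orP; right; exact: pt_in_pset.
case: (boolP (pt lo r \in S)) => dS.
  by exists (pt lo r) => //; apply: Ein; rewrite ?/Epred ?/Wp; secl; lia.
have pi : inside lo hi (pt lo r) by apply: pt_inside; secl; lia.
have [[x0 y0] h0S c0] := Hm (pt lo r) pi dS.
have lon : lo <= n' by secl; lia.
have rn : r <= n' by secl; lia.
rewrite crossE pt1 ?pt2 /= in c0 => //.
case: (boolP [exists h in S, crossn lo r h.1 h.2 && (h.1 != a :> nat) && (h.1 != b :> nat)]).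
  case/exists_inP => [[x y] hS] /= /andP[/andP[cr na] nb].
  exists (x, y) => //; rewrite in_setU; apply/orP; right.
  have := Hi _ hS; rewrite in_pset /inside /Epred /Wp /crossn /= in cr *.
  clear -cr na nb hlo hab hbr hrh hn; lia.
move=> /exists_inP noex.
have noth (h : E) : h \in S -> crossn lo r h.1 h.2 -> (h.1 == a :> nat) || (h.1 == b :> nat).
  move=> hS hc; apply/negP => hn'; apply: noex; exists h => //; rewrite hc /=; move/negP: hn'; by rewrite negb_or.
case: (boolP [exists h in S, crossn lo r h.1 h.2 && (h.1 == a :> nat)]) => A;
case: (boolP [exists h in S, crossn lo r h.1 h.2 && (h.1 == b :> nat)]) => Bb.
-
  case/exists_inP: A => [[xa ya] haS] /= /andP[cra /eqP ea].
  case/exists_inP: Bb => [[xb yb] hbS] /= /andP[crb /eqP eb].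
  rewrite /crossn in cra crb.
  pose S' := [set e in S | inside a b e].
  have HS' : maxnc a b S'.
    split.
    - by move=> e; rewrite inE => /andP[].
    - by move=> e f; rewrite !inE => /andP[eS _] /andP[fS _]; apply: Hn.
    - move=> [u v] gi; rewrite inE negb_and => gn.
      have gS : (u, v) \notin S by case/orP: gn => //; rewrite gi.
      have gi' : inside lo hi (u, v) by apply: (@inside_sub a b) => //; secl; lia.
      have [[s t] hS ch] := Hm _ gi' gS.
      exists (s, t) => //; rewrite inE hS /=.
      have := Hi _ hS; rewrite /inside /= => iS.
      move: gi; rewrite /inside /= => gi.
      move: ch; rewrite crossE /crossn /= => /orP[/and3P[d1 d2 d3] | /and3P[d1 d2 d3]].
      + case: (leqP t b) => tb; first by clear -iS gi d1 d2 d3 tb; lia.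
        exfalso; case: (leqP t r) => tr.
        * have := Hn _ _ hS hbS; rewrite crossE /crossn /=.
          clear -crb eb gi iS d1 d2 d3 tb tr hlo hab hbr hrh; lia.
        * have := noth _ hS; rewrite /crossn /=.
          clear -gi iS d1 d2 d3 tb tr hlo hab hbr hrh; lia.
      + case: (leqP a s) => sa; first by clear -iS gi d1 d2 d3 sa; lia.
        exfalso; have := Hn _ _ hS haS; rewrite crossE /crossn /=.
        clear -cra ea gi iS d1 d2 d3 sa hlo hab hbr hrh; lia.
  case: Cb => _ Cbb; have [c cC cS'] := Cbb _ HS'.
  exists c; first by rewrite in_setU cC.
  by move: cS'; rewrite inE => /andP[].
-
  have Bn (h : E) : h \in S -> crossn lo r h.1 h.2 -> (h.1 != b :> nat).
    move=> hS hc; apply/negP => hb; move/negP: Bb; apply; apply/exists_inP; exists h => //; rewrite hc; assumption.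
  case/exists_inP: A => [[xa ya] haS] /= /andP[cra /eqP ea].
  rewrite /crossn in cra.
  case: (boolP (pt a r \in S)) => arS.
    by exists (pt a r) => //; apply: Ein; rewrite ?/Epred ?/Wp; secl; lia.
  have pa : inside lo hi (pt a r) by apply: pt_inside; secl; lia.
  have an : a <= n' by secl; lia.
  have [[u w] hS ch] := Hm (pt a r) pa arS.
  exfalso.
  have := Hi _ hS; have := Hn _ _ hS haS; have := noth _ hS; have := Bn _ hS.
  move: ch; rewrite !crossE pt1 ?pt2 /crossn /inside //=.
  clear -cra ea hlo hab hbr hrh; lia.
-
  have An (h : E) : h \in S -> crossn lo r h.1 h.2 -> (h.1 != a :> nat).
    move=> hS hc; apply/negP => ha; move/negP: A; apply; apply/exists_inP; exists h => //; rewrite hc; assumption.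
  case/exists_inP: Bb => [[xb yb] hbS] /= /andP[crb /eqP eb].
  rewrite /crossn in crb.
  case: (boolP (pt lo b \in S)) => lbS.
    by exists (pt lo b) => //; apply: Ein; rewrite ?/Epred ?/Wp; secl; lia.
  have pb : inside lo hi (pt lo b) by apply: pt_inside; secl; lia.
  have bn : b <= n' by secl; lia.
  have [[u w] hS ch] := Hm (pt lo b) pb lbS.
  exfalso.
  have := Hi _ hS; have := Hn _ _ hS hbS; have := noth _ hS; have := An _ hS.
  move: ch; rewrite !crossE pt1 ?pt2 /crossn /inside //=.
  clear -crb eb hlo hab hbr hrh; lia.
-
  exfalso.
  have := noth _ h0S; rewrite /= => /(_ c0) /orP[/eqP e|/eqP e].
  + by move/negP: A; apply; apply/exists_inP; exists (x0, y0) => //=; rewrite c0 e eqxx.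
  + by move/negP: Bb; apply; apply/exists_inP; exists (x0, y0) => //=; rewrite c0 e eqxx.
Qed.

Definition okh lo' hi' (P : nat -> nat -> bool) (p q u w : nat) : bool :=
  [&& lo' <= u, u.+2 <= w, w <= hi', ~~ ((u == lo') && (w == hi')), P u w & crossn p q u w].

Lemma cover_pset lo' hi' P (c' : E) : hi' <= n' -> (exists u w, okh lo' hi' P c'.1 c'.2 u w) ->
  exists2 h, h \in pset lo' hi' P & cross c' h.
Proof.
move=> hh [u [w /and5P[h1 h2 h3 h4 /andP[h5 h6]]]].
exact: (pset_h (u := u) (v := w)).
Qed.

Definition WitP (c : E) (S0 : {set E}) : Prop :=
  [/\ (forall e, e \in S0 -> inside lo hi e), ncs S0, c \in S0 &
      forall c', c' \in Constr lo a b r hi C -> c' != c -> exists2 h, h \in S0 & cross c' h].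

Lemma Constr_mem (p q : 'I_N) : (p, q) \in Constr lo a b r hi C ->
  ((p, q) \in C /\ inside a b (p, q)) \/ (inside lo hi (p, q) /\ Epred lo a b r p q).
Proof.
rewrite in_setU => /orP[cC | cE]; first by left; split => //; case: Cb => H _; apply: H.
by right; move: cE; rewrite in_pset => /andP[].
Qed.

Lemma wit_W (x y : 'I_N) : inside lo hi (x, y) -> Wp lo a b r x y ->
  exists S0, WitP (x, y) S0.
Proof.
rewrite /inside /Wp /= => ic /and5P[w1 w2 w3 w4 w5].
pose Q (u w : nat) := [|| (u == x) && (w == y), (u == lo) && (w == x), (u == x) && (w == r),
                          (u == r) && (w == y) | (u == lo) && (w == y)].
case: (ltngtP x a) => xa.
- (* x < a : fan from x to [x..r] *)
  exists (pset lo hi (fun u w => Q u w || ((u == x) && (w <= r)))); split.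
  + by move=> e; apply: pset_inside.
  + apply: pset_ncs => u w u' w' H1 H2 H3 H4 H5 H6 H7 H8; rewrite /Q in H1 H2; rewrite /crossn; clear -H1 H2 H3 H4 H5 H6 H7 H8 ic w1 w2 w3 w4 w5 xa hbr hab; lia.
  + by rewrite in_pset /inside /Q /= !eqxx /=; clear -ic; lia.
  + move=> [p q] /Constr_mem [[pC pi] | [pi pE]] ne; apply: cover_pset => //=; rewrite /inside /= in pi.
    * exists x, p.+1; rewrite /okh /Q /crossn; clear -pi ic w1 w2 w3 w4 w5 xa hbr hab hlo; lia.
    * move: pE; rewrite eqE2 /= in ne; rewrite /Epred /Wp => /or4P[/and5P[v1 v2 v3 v4 v5] | /andP[/eqP e1 /eqP e2] | /andP[/eqP e1 /eqP e2] | /andP[/eqP e1 /eqP e2]].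
      -- case: (ltngtP p x) => hpx.
         ++ exists lo, x; rewrite /okh /Q /crossn; clear -pi ic w1 w2 w3 w4 w5 xa hbr hab hlo v1 v2 v3 hpx; lia.
         ++ exists x, r; rewrite /okh /Q /crossn; clear -pi ic w1 w2 w3 w4 w5 xa hbr hab hlo v1 v2 v3 hpx; lia.
         ++ case: (ltngtP q y) => hqy.
            ** exists r, y; rewrite /okh /Q /crossn; clear -pi ic w1 w2 w3 w4 w5 xa hbr hab hlo v1 v2 v3 hpx hqy; lia.
            ** exists lo, y; rewrite /okh /Q /crossn; clear -pi ic w1 w2 w3 w4 w5 xa hbr hab hlo v1 v2 v3 hpx hqy; lia.
            ** by move: ne; rewrite hpx hqy !eqxx.
      -- exists x, r; rewrite /okh /Q /crossn; clear -e1 e2 ic w1 w2 w3 w4 w5 xa hbr hab hlo; lia.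
      -- exists x, a.+1; rewrite /okh /Q /crossn; clear -e1 e2 ic w1 w2 w3 w4 w5 xa hbr hab hlo; lia.
      -- exists x, y; rewrite /okh /Q /crossn; clear -e1 e2 ic w1 w2 w3 w4 w5 xa hbr hab hlo; lia.
-
  case: (ltngtP x b) => xb.
  + (* a < x < b : fan from lo on [lo..x], fan to r on [x..r] *)
    exists (pset lo hi (fun u w => [|| Q u w, (u == lo) && (w <= x) | (w == r) && (x <= u)])); split.
    * by move=> e; apply: pset_inside.
    * apply: pset_ncs => u w u' w' H1 H2 H3 H4 H5 H6 H7 H8; rewrite /Q in H1 H2; rewrite /crossn; clear -H1 H2 H3 H4 H5 H6 H7 H8 ic w1 w2 w3 w4 w5 xa xb hbr hab; lia.
    * by rewrite in_pset /inside /Q /= !eqxx /=; clear -ic; lia.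
    * move=> [p q] /Constr_mem [[pC pi] | [pi pE]] ne; apply: cover_pset => //=; rewrite /inside /= in pi.
      -- case: (ltnP p x) => hpx.
         ++ case: (ltnP x q) => hxq.
            ** exists x, y; rewrite /okh /Q /crossn; clear -pi ic w1 w2 w3 w4 w5 xa xb hbr hab hlo hpx hxq; lia.
            ** exists lo, p.+1; rewrite /okh /Q /crossn; clear -pi ic w1 w2 w3 w4 w5 xa xb hbr hab hlo hpx hxq; lia.
         ++ exists p.+1, r; rewrite /okh /Q /crossn; clear -pi ic w1 w2 w3 w4 w5 xa xb hbr hab hlo hpx; lia.
      -- move: pE; rewrite eqE2 /= in ne; rewrite /Epred /Wp => /or4P[/and5P[v1 v2 v3 v4 v5] | /andP[/eqP e1 /eqP e2] | /andP[/eqP e1 /eqP e2] | /andP[/eqP e1 /eqP e2]].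
         ++ case: (ltngtP p x) => hpx.
            ** exists lo, x; rewrite /okh /Q /crossn; clear -pi ic w1 w2 w3 w4 w5 xa xb hbr hab hlo v1 v2 v3 hpx; lia.
            ** exists x, r; rewrite /okh /Q /crossn; clear -pi ic w1 w2 w3 w4 w5 xa xb hbr hab hlo v1 v2 v3 hpx; lia.
            ** case: (ltngtP q y) => hqy.
               --- exists r, y; rewrite /okh /Q /crossn; clear -pi ic w1 w2 w3 w4 w5 xa xb hbr hab hlo v1 v2 v3 hpx hqy; lia.
               --- exists lo, y; rewrite /okh /Q /crossn; clear -pi ic w1 w2 w3 w4 w5 xa xb hbr hab hlo v1 v2 v3 hpx hqy; lia.
               --- by move: ne; rewrite hpx hqy !eqxx.
         ++ exists x, r; rewrite /okh /Q /crossn; clear -e1 e2 ic w1 w2 w3 w4 w5 xa xb hbr hab hlo; lia.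
         ++ exists lo, x; rewrite /okh /Q /crossn; clear -e1 e2 ic w1 w2 w3 w4 w5 xa xb hbr hab hlo; lia.
         ++ exists x, y; rewrite /okh /Q /crossn; clear -e1 e2 ic w1 w2 w3 w4 w5 xa xb hbr hab hlo; lia.
  + (* x > b : fan to x from [lo..x] *)
    exists (pset lo hi (fun u w => Q u w || (w == x))); split.
    * by move=> e; apply: pset_inside.
    * apply: pset_ncs => u w u' w' H1 H2 H3 H4 H5 H6 H7 H8; rewrite /Q in H1 H2; rewrite /crossn; clear -H1 H2 H3 H4 H5 H6 H7 H8 ic w1 w2 w3 w4 w5 xa xb hbr hab; lia.
    * by rewrite in_pset /inside /Q /= !eqxx /=; clear -ic; lia.
    * move=> [p q] /Constr_mem [[pC pi] | [pi pE]] ne; apply: cover_pset => //=; rewrite /inside /= in pi.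
      -- exists p.+1, x; rewrite /okh /Q /crossn; clear -pi ic w1 w2 w3 w4 w5 xa xb hbr hab hlo; lia.
      -- move: pE; rewrite eqE2 /= in ne; rewrite /Epred /Wp => /or4P[/and5P[v1 v2 v3 v4 v5] | /andP[/eqP e1 /eqP e2] | /andP[/eqP e1 /eqP e2] | /andP[/eqP e1 /eqP e2]].
         ++ case: (ltngtP p x) => hpx.
            ** exists lo, x; rewrite /okh /Q /crossn; clear -pi ic w1 w2 w3 w4 w5 xa xb hbr hab hlo v1 v2 v3 hpx; lia.
            ** exists x, r; rewrite /okh /Q /crossn; clear -pi ic w1 w2 w3 w4 w5 xa xb hbr hab hlo v1 v2 v3 hpx; lia.
            ** case: (ltngtP q y) => hqy.
               --- exists r, y; rewrite /okh /Q /crossn; clear -pi ic w1 w2 w3 w4 w5 xa xb hbr hab hlo v1 v2 v3 hpx hqy; lia.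
               --- exists lo, y; rewrite /okh /Q /crossn; clear -pi ic w1 w2 w3 w4 w5 xa xb hbr hab hlo v1 v2 v3 hpx hqy; lia.
               --- by move: ne; rewrite hpx hqy !eqxx.
         ++ exists a, x; rewrite /okh /Q /crossn; clear -e1 e2 ic w1 w2 w3 w4 w5 xa xb hbr hab hlo; lia.
         ++ exists x, y; rewrite /okh /Q /crossn; clear -e1 e2 ic w1 w2 w3 w4 w5 xa xb hbr hab hlo; lia.
         ++ exists x, y; rewrite /okh /Q /crossn; clear -e1 e2 ic w1 w2 w3 w4 w5 xa xb hbr hab hlo; lia.
  + by move: w5; rewrite xb eqxx.
- by move: w4; rewrite xa eqxx.
Qed.

Lemma wit_lob (x y : 'I_N) : x = lo :> nat -> y = b :> nat -> exists S0, WitP (x, y) S0.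
Proof.
move=> ex1 ex2.
exists (pset lo hi (fun u w => ((u == lo) && (w <= b)) || ((u == b) && (r <= w)))); split.
- by move=> e; apply: pset_inside.
- apply: pset_ncs => u w u' w' H1 H2 H3 H4 H5 H6 H7 H8; rewrite /crossn; clear -H1 H2 H3 H4 H5 H6 H7 H8 hlo hab hbr hrh; lia.
- by rewrite in_pset /inside /= ex1 ex2 !eqxx /=; clear -hlo hab hbr hrh; lia.
- move=> [p q] /Constr_mem [[pC pi] | [pi pE]] ne; apply: cover_pset => //=; rewrite /inside /= in pi.
  + exists lo, p.+1; rewrite /okh /crossn; clear -pi ex1 ex2  hlo hab hbr hrh; lia.
  + move: pE; rewrite eqE2 /= in ne; rewrite /Epred /Wp => /or4P[/and5P[v1 v2 v3 v4 v5] | /andP[/eqP e1 /eqP e2] | /andP[/eqP e1 /eqP e2] | /andP[/eqP e1 /eqP e2]].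
    * case: (ltngtP p b) => hpb.
      -- exists lo, b; rewrite /okh /crossn; clear -pi ex1 ex2 v1 v2 v3 v4 v5 hpb hlo hab hbr hrh; lia.
      -- exists b, r; rewrite /okh /crossn; clear -pi ex1 ex2 v1 v2 v3 v4 v5 hpb hlo hab hbr hrh; lia.
      -- by move: v5; rewrite hpb eqxx.
    * by move: ne; rewrite e1 e2 ex1 ex2 !eqxx.
    * exists lo, b; rewrite /okh /crossn; clear -pi ex1 ex2 e1 e2 hlo hab hbr hrh; lia.
    * exists b, hi; rewrite /okh /crossn; clear -pi ex1 ex2 e1 e2 hlo hab hbr hrh; lia.
Qed.

Lemma wit_ar (x y : 'I_N) : x = a :> nat -> y = r :> nat -> exists S0, WitP (x, y) S0.
Proof.
move=> ex1 ex2.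
exists (pset lo hi (fun u w => [|| (u == lo) && (w == a), (w == r) && (a <= u) | (u == a) && (r <= w)])); split.
- by move=> e; apply: pset_inside.
- apply: pset_ncs => u w u' w' H1 H2 H3 H4 H5 H6 H7 H8; rewrite /crossn; clear -H1 H2 H3 H4 H5 H6 H7 H8 hlo hab hbr hrh; lia.
- by rewrite in_pset /inside /= ex1 ex2 !eqxx /=; clear -hlo hab hbr hrh; lia.
- move=> [p q] /Constr_mem [[pC pi] | [pi pE]] ne; apply: cover_pset => //=; rewrite /inside /= in pi.
  + exists p.+1, r; rewrite /okh /crossn; clear -pi ex1 ex2  hlo hab hbr hrh; lia.
  + move: pE; rewrite eqE2 /= in ne; rewrite /Epred /Wp => /or4P[/and5P[v1 v2 v3 v4 v5] | /andP[/eqP e1 /eqP e2] | /andP[/eqP e1 /eqP e2] | /andP[/eqP e1 /eqP e2]].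
    * case: (ltngtP p a) => hpa.
      -- exists lo, a; rewrite /okh /crossn; clear -pi ex1 ex2 v1 v2 v3 v4 v5 hpa hlo hab hbr hrh; lia.
      -- exists a, r; rewrite /okh /crossn; clear -pi ex1 ex2 v1 v2 v3 v4 v5 hpa hlo hab hbr hrh; lia.
      -- by move: v4; rewrite hpa eqxx.
    * exists a, r; rewrite /okh /crossn; clear -pi ex1 ex2 e1 e2 hlo hab hbr hrh; lia.
    * by move: ne; rewrite e1 e2 ex1 ex2 !eqxx.
    * exists a, hi; rewrite /okh /crossn; clear -pi ex1 ex2 e1 e2 hlo hab hbr hrh; lia.
Qed.

Lemma wit_lor (x y : 'I_N) : x = lo :> nat -> y = r :> nat -> exists S0, WitP (x, y) S0.
Proof.
move=> ex1 ex2.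
exists (pset lo hi (fun u w => [|| (u == lo) && (w == r), (u == lo) && (w == a.+1) | (w == r) && (a.+1 <= u)])); split.
- by move=> e; apply: pset_inside.
- apply: pset_ncs => u w u' w' H1 H2 H3 H4 H5 H6 H7 H8; rewrite /crossn; clear -H1 H2 H3 H4 H5 H6 H7 H8 hlo hab hbr hrh; lia.
- by rewrite in_pset /inside /= ex1 ex2 !eqxx /=; clear -hlo hab hbr hrh; lia.
- move=> [p q] /Constr_mem [[pC pi] | [pi pE]] ne; apply: cover_pset => //=; rewrite /inside /= in pi.
  + case: (ltnP p a.+1) => hpa.
    * exists lo, a.+1; rewrite /okh /crossn; clear -pi ex1 ex2 hpa hlo hab hbr hrh; lia.
    * exists p.+1, r; rewrite /okh /crossn; clear -pi ex1 ex2 hpa hlo hab hbr hrh; lia.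
  + move: pE; rewrite eqE2 /= in ne; rewrite /Epred /Wp => /or4P[/and5P[v1 v2 v3 v4 v5] | /andP[/eqP e1 /eqP e2] | /andP[/eqP e1 /eqP e2] | /andP[/eqP e1 /eqP e2]].
    * exists lo, r; rewrite /okh /crossn; clear -pi ex1 ex2 v1 v2 v3 v4 v5 hlo hab hbr hrh; lia.
    * exists a.+1, r; rewrite /okh /crossn; clear -pi ex1 ex2 e1 e2 hlo hab hbr hrh; lia.
    * exists lo, a.+1; rewrite /okh /crossn; clear -pi ex1 ex2 e1 e2 hlo hab hbr hrh; lia.
    * by move: ne; rewrite e1 e2 ex1 ex2 !eqxx.
Qed.

Lemma wit_C (c : E) : c \in C -> exists S0, WitP c S0.
Proof.
move=> cC; have [S0c [S0i S0n cS0 S0c']] := Cw cC.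
case: Cb => Ci _.
pose Zp (u w : nat) := [|| (u == lo) && (w == a), (u == a) && (w == b), (u == b) && (r <= w) | (u == a) && (w == hi)].
exists (S0c :|: pset lo hi Zp); split.
- move=> e; rewrite in_setU => /orP[eS | eZ]; last exact: pset_inside eZ.
  by apply: (@inside_sub a b); [clear -hlo; lia | clear -hbr hrh; lia | apply: S0i].
- move=> [u v] [u' v']; rewrite !in_setU => /orP[eS | eZ] /orP[fS | fZ].
  + exact: S0n.
  + have := S0i _ eS; move: fZ; rewrite in_pset /inside /Zp crossE /crossn /= => /andP[H1 H2] H3.
    clear -H1 H2 H3 hlo hab hbr hrh; lia.
  + have := S0i _ fS; move: eZ; rewrite in_pset /inside /Zp crossE /crossn /= => /andP[H1 H2] H3.
    clear -H1 H2 H3 hlo hab hbr hrh; lia.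
  + by move: (u, v) (u', v') eZ fZ; apply: pset_ncs => p q p' q' H1 H2 H3 H4 H5 H6 H7 H8; rewrite /Zp /crossn in H1 H2 *; clear -H1 H2 H3 H4 H5 H6 H7 H8 hlo hab hbr hrh; lia.
- by rewrite in_setU cS0.
- move=> [p q] cc ne.
  case: (boolP ((p, q) \in C)) => pC.
    by have [h hS ch] := S0c' _ pC ne; exists h => //; rewrite in_setU hS.
  have [h hS ch] : exists2 h, h \in pset lo hi Zp & cross (p, q) h.
    case/Constr_mem: cc => [[pC' _] | [pi pE]]; first by rewrite pC' in pC.
    apply: cover_pset => //=; rewrite /inside /= in pi.
    move: pE; rewrite /Epred /Wp => /or4P[/and5P[v1 v2 v3 v4 v5] | /andP[/eqP e1 /eqP e2] | /andP[/eqP e1 /eqP e2] | /andP[/eqP e1 /eqP e2]].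
    * case: (ltngtP p a) => hpa; last by move: v4; rewrite hpa eqxx.
      -- exists lo, a; rewrite /okh /Zp /crossn; clear -pi v1 v2 v3 v4 v5 hpa hlo hab hbr hrh; lia.
      -- case: (ltngtP p b) => hpb; last by move: v5; rewrite hpb eqxx.
         ++ exists a, b; rewrite /okh /Zp /crossn; clear -pi v1 v2 v3 v4 v5 hpa hpb hlo hab hbr hrh; lia.
         ++ exists b, r; rewrite /okh /Zp /crossn; clear -pi v1 v2 v3 v4 v5 hpa hpb hlo hab hbr hrh; lia.
    * exists a, hi; rewrite /okh /Zp /crossn; clear -pi e1 e2 hlo hab hbr hrh; lia.
    * exists b, hi; rewrite /okh /Zp /crossn; clear -pi e1 e2 hlo hab hbr hrh; lia.
    * exists b, hi; rewrite /okh /Zp /crossn; clear -pi e1 e2 hlo hab hbr hrh; lia.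
  by exists h => //; rewrite in_setU hS orbT.
Qed.

Lemma Constr_wit : witnessed lo hi (Constr lo a b r hi C).
Proof.
move=> [x y] cc.
have [S0 [H1 H2 H3 H4]] : exists S0, WitP (x, y) S0.
  case/Constr_mem: (cc) => [[cC _] | [ci cE]]; first exact: wit_C.
  move: cE; rewrite /Epred => /or4P[cW | /andP[/eqP e1 /eqP e2] | /andP[/eqP e1 /eqP e2] | /andP[/eqP e1 /eqP e2]].
  - exact: wit_W.
  - exact: wit_lob.
  - exact: wit_ar.
  - exact: wit_lor.
by exists S0; split.
Qed.

Lemma Constr_card : #|Constr lo a b r hi C| = #|C| + ((r - lo - 3) * (hi - r) + 3).
Proof.
have an : a <= n' by clear -hlo hab hbr hrh hn; lia.
have bn : b <= n' by clear -hlo hab hbr hrh hn; lia.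
have rn : r <= n' by clear -hlo hab hbr hrh hn; lia.
have lon : lo <= n' by clear -hlo hab hbr hrh hn; lia.
have Ee : pset lo hi (Epred lo a b r) = pt lo b |: (pt a r |: (pt lo r |:
          setX ((itv lo.+1 r :\ inord a) :\ inord b) (itv r.+1 hi.+1))).
  apply/setP => [[p q]]; rewrite !in_setU1 !eq_pt // in_pset /inside /Epred /Wp !inE /=.
  rewrite -!val_eqE /= !inordK; try (clear -an bn; lia).
  apply/idP/idP; clear -hlo hab hbr hrh hn; lia.
rewrite /Constr cardsU.
have -> : C :&: pset lo hi (Epred lo a b r) = set0.
  apply/setP => [[p q]]; rewrite !inE /=; apply/negP => /andP[pC /andP[_ pE]].
  case: Cb => Ci _; have := Ci _ pC; move: pE; rewrite /inside /Epred /Wp /=.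
  clear -hlo hab hbr hrh; lia.
rewrite cards0 subn0 Ee.
rewrite !cardsU1 cardsX !card_itv; try (clear -hrh hn; lia).
have m1 : (pt lo b \notin pt a r |: (pt lo r |: setX (itv lo.+1 r :\ inord a :\ inord b) (itv r.+1 hi.+1))) = true.
  rewrite !in_setU1 !eq_pt // !inE /= -!val_eqE /= !inordK //; clear -hlo hab hbr hrh; lia.
have m2 : (pt a r \notin pt lo r |: setX (itv lo.+1 r :\ inord a :\ inord b) (itv r.+1 hi.+1)) = true.
  rewrite !in_setU1 !eq_pt // !inE /= -!val_eqE /= !inordK //; clear -hlo hab hbr hrh; lia.
have m3 : (pt lo r \notin setX (itv lo.+1 r :\ inord a :\ inord b) (itv r.+1 hi.+1)) = true.
  rewrite !inE /= -!val_eqE /= !inordK //; clear -hlo hab hbr hrh; lia.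
have ca : #|itv lo.+1 r| = (inord a \in itv lo.+1 r) + #|itv lo.+1 r :\ inord a| by apply: cardsD1.
have cb : #|itv lo.+1 r :\ inord a| = (inord b \in itv lo.+1 r :\ inord a) + #|itv lo.+1 r :\ inord a :\ inord b| by apply: cardsD1.
rewrite card_itv in ca; last by clear -hrh hn hbr; lia.
have ia : (inord a \in itv lo.+1 r) = true by rewrite !inE /= !inordK //; clear -hlo hab hbr; lia.
have ib : (inord b \in itv lo.+1 r :\ inord a) = true by rewrite !inE /= -!val_eqE /= !inordK //; clear -hlo hab hbr; lia.
rewrite ia in ca; rewrite ib in cb.
rewrite m1 m2 m3.
move: ca cb; move: #|_ :\ inord a :\ inord b| #|_ :\ inord a| => X Y ca cb.
clear -ca cb hlo hab hbr hrh; nia.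
Qed.


End Hyps.
End G2.


Section G3.
Variable n' : nat.
Local Notation N := n'.+1.
Local Notation E := ('I_N * 'I_N)%type.
Local Notation inside := (@inside n').
Local Notation blocks := (@blocks n').
Local Notation witnessed := (@witnessed n').
Local Notation Xfam := (@Xfam n').
Local Notation Constr := (@Constr n').

Lemma M_small q : q < 4 -> M q = 0.
Proof. by case: q => [|[|[|[|q]]]]. Qed.

Lemma blocks_gap a b (C : {set E}) : blocks a b C -> 0 < #|C| -> a.+2 <= b.
Proof.
case=> Ci _ /card_gt0P [[x y] cC].
by have := Ci _ cC; rewrite /inside /=; lia.
Qed.

Lemma realize q : forall s lo, 2 <= s <= M q -> lo + q <= N ->
  exists a b (C : {set E}), [/\ lo <= a, b < lo + q, blocks a b C, witnessed a b C & #|C| = s].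
Proof.
elim/ltn_ind: q => q IH s lo hs hq.
have q4 : 4 <= q.
  case: (ltnP q 4) => // h; move: hs; rewrite M_small //; lia.
have := stepok_all hs; rewrite /stepok => /or3P[h1 | h2 | h3].
- have [a [b [C [H1 H2 H3 H4 H5]]]] := IH q.-1 ltac:(lia) s lo ltac:(lia) ltac:(lia).
  by exists a, b, C; split => //; lia.
- case/hasP: h2 => qq; rewrite mem_iota => hqq /hasP [k]; rewrite mem_iota => hk /eqP es.
  exists lo, (lo + qq - 1), (Xfam lo (lo + k + 1) (lo + qq - 1)); split; try lia.
  + apply: Xfam_blocks; lia.
  + apply: Xfam_wit; lia.
  + have e1 : lo + k + 1 - lo - 1 = k by lia.
    have e2 : lo + qq - 1 - (lo + k + 1) = qq - 2 - k by lia.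
    by rewrite Xfam_card ?e1 ?e2 -?es //; lia.
- case/hasP: h3 => r; rewrite mem_iota => hr /andP[hr1 hr2].
  have [a [b [C [H1 H2 H3 H4 H5]]]] := IH r.-1 ltac:(lia) (s - base q r) lo.+1 ltac:(lia) ltac:(lia).
  have gab : a.+2 <= b by apply: (blocks_gap H3); lia.
  exists lo, (lo + q - 1), (Constr lo a b (lo + r) (lo + q - 1) C); split; try lia.
  + apply: Constr_blocks => //; lia.
  + apply: Constr_wit => //; lia.
  + rewrite Constr_card //; try lia.
    rewrite H5 /base in hr1 hr2 *.
    have -> : lo + r - lo - 3 = r - 3 by lia.
    have -> : lo + q - 1 - (lo + r) = q - 1 - r by lia.
    move: hr1 hr2; move: ((r - 3) * (q - 1 - r)) => P; lia.
Qed.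
End G3.

Import Order.TTheory GRing.Theory Num.Theory.
Local Open Scope ring_scope.

Theorem lemma3p4 (n : nat) (t : int) :
  (25 <= n)%N ->
  (n%:R ^+ 2 / 8 + n%:R / 2 - 2 <= t%:~R :> rat) ->
  (t%:~R <= n%:R ^+ 2 / 4 + n%:R ^+ 2 / 16 - 3 * n%:R + 205 / 16 :> rat) ->
  exists B : {set 'I_n * 'I_n}, nt_blocker t B.
Proof.
case: n => [//|n'] h25 h1 h2.
have hn : (25%:R <= n'.+1%:R :> rat) by rewrite ler_nat.
have hsq : (0 <= n'.+1%:R ^+ 2 :> rat) by rewrite exprn_ge0 // ler0n.
have [tn et] : exists tn : nat, t = tn%:Z.
  case: t h1 h2 => [tn|tn] h1 h2; first by exists tn.
  exfalso.
  have hneg : ((Negz tn)%:~R : rat) < 0 by rewrite ltrz0.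
  lra.
subst t.
have e : (((tn%:Z)%:~R) : rat) = tn%:R by [].
rewrite e in h1 h2.
have i1 : ((n'.+1 * n'.+1 + 4 * n'.+1)%:R <= (8 * tn + 16)%:R :> rat).
  rewrite !natrD !natrM; rewrite expr2 in h1; lra.
have i2 : ((16 * tn + 48 * n'.+1)%:R <= (5 * (n'.+1 * n'.+1) + 205)%:R :> rat).
  rewrite !natrD !natrM; rewrite !expr2 in h2; lra.
rewrite ler_nat in i1; rewrite ler_nat in i2.
have [r [r5 rn hb1 hb2]] := top_arith h25 i1 i2.
have [a [b [C [H1 H2 H3 H4 H5]]]] := @realize n' r.-1 (tn - base n'.+1 r) 1 ltac:(lia) ltac:(lia).
have gab : (a.+2 <= b)%N by apply: (blocks_gap H3); lia.
exists (Constr 0 a b r n' C); split.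
- apply: top_sat.
  + apply: Constr_blocks => //; lia.
  + apply: Constr_wit => //; lia.
- rewrite Constr_card //; try lia.
  congr Posz.
  rewrite H5 /base in hb1 hb2 *.
  have e1 : (r - 0 - 3 = r - 3)%N by lia.
  have e2 : (n'.+1 - 1 - r = n' - r)%N by lia.
  rewrite e1 e2 in hb1 hb2 *.
  move: hb1 hb2; move: (r - 3)%N (n' - r)%N => X Y; clear; nia.
Qed.
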